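(* Let $T=(V,L)$ be a substrate tree, $\mathcal{J}=\langle N,B\rangle$ a request, and $N'\in\{1,\dots,N\}$ an integer. Let $\mathcal{C}$ be a VCE of the augmented request $\mathcal{J}'=\langle N+N',B\rangle$ in $T$ such that $\mathcal{C}(h)\le N'$ for every PM $h\in H$. Then $(\mathcal{C}_s,\mathcal{B}_s)$ with $\mathcal{C}_s=\mathcal{C}$ and $\mathcal{B}_s(l_v)=\min\{n_v,N+N'-n_v\}\cdot B$ (where $n_v=\sum_{h\in H\cap T_v}\mathcal{C}(h)$) is a feasible SVCE of $\mathcal{J}$.
   Context: Substrate: an undirected tree $T=(V,L)$ with $V=H\cup S$, where $H$ (the physical machines, PMs) are exactly the leaves and $S$ (switches) are the internal nodes, rooted at some $r\in S$. For $v\in V$, $T_v$ is the subtree rooted at $v$ and $l_v$ is the link from $v$ to its parent. Each PM $h$ has $c_h\in\mathbb{Z}_{\ge0}$ available VM slots and each non-root node $v$ has available bandwidth $b_v\ge0$ on $l_v$. A request is $\langle M,B\rangle$ with $M$ a positive integer and $B\ge0$. VCE: given a tree with PM capacities $c_h$ and link bandwidths $b_v$, a virtual cluster embedding of $\langle M,B\rangle$ is a function $\mathcal{C}:H\to\mathbb{Z}_{\ge0}$ with $\mathcal{C}(h)\le c_h$ for all $h$, $\sum_{h\in H}\mathcal{C}(h)=M$, and $\min\{n_v,M-n_v\}\cdot B\le b_v$ for every link $l_v$, where $n_v=\sum_{h\in H\cap T_v}\mathcal{C}(h)$. SVCE of $\mathcal{J}=\langle N,B\rangle$: a pair $(\mathcal{C}_s,\mathcal{B}_s)$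 with $\mathcal{C}_s:H\to\mathbb{Z}_{\ge0}$, $\mathcal{C}_s(h)\le c_h$, and $\mathcal{B}_s:L\to\mathbb{R}_{\ge0}$, $\mathcal{B}_s(l_v)\le b_v$, such that for every PM $F\in H$ there exists a VCE of $\langle N,B\rangle$ in the tree $(V\setminus\{F\},L\setminus\{l_F\})$ whose PM capacities are $\mathcal{C}_s(h)$ ($h\neq F$) and whose link bandwidths are $\mathcal{B}_s(l_v)$. *)

(* Defs.v *)
From mathcomp Require Import all_boot all_order all_algebra.
Set Implicit Arguments. Unset Strict Implicit. Unset Printing Implicit Defensive.
Import Order.TTheory GRing.Theory Num.Theory.
Local Open Scope ring_scope.

(* A rooted tree on a finite vertex type V is given by a parent map:
   the root r is its own parent, every vertex reaches r by iterating parent,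
   and the root has at least one child (so r is a switch, not a leaf). The
   link l_v of a non-root v is the edge {v, parent v}. *)
Definition is_rooted_tree (V : finType) (parent : V -> V) (r : V) : Prop :=
  [/\ parent r = r,
      (forall v, exists k, iter k parent v = r)
    & exists v, v != r /\ parent v = r].

Definition is_pm (V : finType) (parent : V -> V) (v : V) : bool :=
  ~~ [exists u, (u != v) && (parent u == v)].

Definition in_subtree (V : finType) (parent : V -> V) (v u : V) : bool :=
  fconnect parent u v.

Definition nv (V : finType) (parent : V -> V) (X : {set V}) (C : V -> nat)
    (v : V) : nat :=
  (\sum_(h | is_pm parent h && (h \notin X) && in_subtree parent v h) C h)%N.

(* VCE of <M,B> in the tree obtained from T by deleting the PMs in X (and
   their links), with PM capacities c and link bandwidths b (b v is the
   bandwidth of link l_v).  Only the values of C on remaining PMs matter. *)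
Definition vce (R : realFieldType) (V : finType) (parent : V -> V) (r : V)
    (X : {set V}) (c : V -> nat) (b : V -> R) (M : nat) (B : R)
    (C : V -> nat) : Prop :=
  [/\ (forall h, is_pm parent h -> h \notin X -> (C h <= c h)%N),
      (\sum_(h | is_pm parent h && (h \notin X)) C h)%N = M
    & forall v, v != r -> v \notin X ->
        (minn (nv parent X C v) (M - nv parent X C v))%:R * B <= b v].

Definition svce (R : realFieldType) (V : finType) (parent : V -> V) (r : V)
    (c : V -> nat) (b : V -> R) (N : nat) (B : R)
    (Cs : V -> nat) (Bs : V -> R) : Prop :=
  [/\ (forall h, is_pm parent h -> (Cs h <= c h)%N),
      (forall v, v != r -> 0 <= Bs v <= b v)
    & forall F, is_pm parent F ->
        exists C, vce parent r [set F] Cs Bs N B C].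

(* Main.v *)
Require Import Defs.
From mathcomp Require Import all_boot all_order all_algebra.
From mathcomp Require Import zify.
Import Order.TTheory GRing.Theory Num.Theory.
Local Open Scope ring_scope.

Lemma sub_sum_exists (V : finType) (P : pred V) (f : V -> nat) (N : nat) :
  (N <= \sum_(h | P h) f h)%N ->
  exists g : V -> nat, (forall h, g h <= f h)%N /\ (\sum_(h | P h) g h)%N = N.
Proof.
elim: N => [|N IH] H.
  by exists (fun _ => 0%N); split => // ; rewrite big1.
have [g [gf sg]] := IH (ltnW H).
case: (pickP (fun x => P x && (g x < f x))%N) => [x /andP[Px lt] | none].
  exists (fun y => g y + (y == x))%N; split.
    by move=> h; case: eqP => [->|_]; rewrite ?addn1 ?addn0.
  rewrite big_split /= sg (bigD1 x) //= eqxx big1 ?addn0 ?addn1 //.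
  by move=> i /andP[_ /negbTE ->].
exfalso.
have : (\sum_(h | P h) f h <= \sum_(h | P h) g h)%N.
  apply: leq_sum => i Pi; have := none i; rewrite Pi /= => /negbT.
  by rewrite -leqNgt.
by rewrite sg; lia.
Qed.

Theorem lemma3 (R : realFieldType) (V : finType) (parent : V -> V) (r : V)
    (c : V -> nat) (b : V -> R) (N N' : nat) (B : R) (C : V -> nat) :
  is_rooted_tree parent r ->
  (forall v, v != r -> 0 <= b v) ->
  (0 < N)%N -> 0 <= B ->
  (1 <= N')%N -> (N' <= N)%N ->
  vce parent r set0 c b (N + N') B C ->
  (forall h, is_pm parent h -> (C h <= N')%N) ->
  svce parent r c b N B C
    (fun v => (minn (nv parent set0 C v) (N + N' - nv parent set0 C v))%:R * B).
Proof.
move=> _ _ _ B0 _ _ [Cc Csum Cb] CN'.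
split.
- by move=> h pm; apply: Cc => //; rewrite in_set0.
- move=> v vr; rewrite mulr_ge0 ?ler0n //=.
  by apply: Cb => //; rewrite in_set0.
move=> F pmF.
set S := fun h => is_pm parent h && (h \notin [set F]).
have sumS : (C F + \sum_(h | S h) C h)%N = (N + N')%N.
  rewrite -Csum [in RHS](bigD1 F); last by rewrite in_set0 andbT.
  congr (_ + _)%N; apply: eq_bigl => h.
  by rewrite /S in_set0 in_set1 andbT.
have [C' [C'C sC']] := @sub_sum_exists V S (fun h => C h) N
  ltac:(have := CN' F pmF; lia).
exists (fun h => minn (C' h) (C h)); split.
- by move=> h _ _; apply: geq_minr.
- rewrite -sC'; apply: eq_bigr => h _; apply/minn_idPl; exact: C'C.
move=> v vr vF.
set D := fun h => (C h - C' h)%N.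
have splitC : forall Q : pred V, (\sum_(h | Q h) C h)%N =
    (\sum_(h | Q h) C' h + \sum_(h | Q h) D h)%N.
  move=> Q; rewrite -big_split /=; apply: eq_bigr => h _.
  by rewrite /D subnKC.
have nv'E : nv parent [set F] (fun h => minn (C' h) (C h)) v =
   (\sum_(h | S h && in_subtree parent v h) C' h)%N.
  rewrite /nv; apply: eq_bigr => h _; apply/minn_idPl; exact: C'C.
have nvE : exists p, (p <= C F)%N /\ nv parent set0 C v =
   (p + \sum_(h | S h && in_subtree parent v h) C h)%N.
  rewrite /nv (bigID (fun h => h \in [set F])) /=.
  eexists; split; last first.
    congr (_ + _)%N; apply: eq_bigl => h.
    rewrite /S in_set0 andbT.
    by case: (is_pm parent h); case: (in_subtree parent v h); case: (h \in [set F]).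
  case: (boolP (is_pm parent F && (F \notin set0) && in_subtree parent v F)) => AF.
    rewrite (eq_bigl (fun h => h == F)) ?big_pred1_eq //.
    move=> h; rewrite in_set1; case: eqP => [->|_]; by rewrite ?andbT ?andbF.
  rewrite big_pred0 // => h; rewrite in_set1; case: eqP => [->|] /=.
    by rewrite andbT (negbTE AF).
  by rewrite andbF.
have [p [pCF nvE']] := nvE.
have Dsub : (\sum_(h | S h && in_subtree parent v h) D h <= \sum_(h | S h) D h)%N.
  rewrite [X in (_ <= X)%N]big_mkcond [X in (X <= _)%N]big_mkcond.
  apply: leq_sum => i _; case: (S i) => //=; case: (in_subtree _ _ _) => //.
have e1 := splitC (fun h => S h && in_subtree parent v h).
have e2 := splitC S.
have CF := CN' F pmF.
rewrite nv'E.
set a := nv parent set0 C v in nvE' *.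
set a' := (\sum_(h | S h && in_subtree parent v h) C' h)%N in e1 *.
have key : (a <= a' + N' /\ a' <= a)%N.
  move: e1 e2 Dsub nvE' sumS sC' CF pCF.
  set x1 := (\sum_(h | S h && in_subtree parent v h) C h)%N.
  set x2 := (\sum_(h | S h && in_subtree parent v h) D h)%N.
  set x3 := (\sum_(h | S h) C h)%N.
  set x4 := (\sum_(h | S h) D h)%N.
  set x5 := (\sum_(h | S h) C' h)%N.
  lia.
apply: ler_wpM2r => //; rewrite ler_nat.
move: key; lia.
Qed.
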